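(* Let $G=\langle S_k\mid K\rangle$ be a finitely generated semigroup as described in the context, $\mathcal{A}$ a finite alphabet and $X\subseteq\mathcal{A}^G$ a tree shift. For all $1\le i\le k$, $m\ge0$, $n\ge0$ and $q\ge1$: (i) $|\bar{\Delta}^{(s_i)}_n|=1+\sum_{l=1}^n\sum_{j=1}^k K^l(s_i,s_j)$; (ii) $|\bar{\Delta}^{(s_i)}_{n+q(m+1)}|=|\bar{\Delta}^{(s_i)}_n|+\sum_{l=1}^k\sum_{j=0}^{q-1}K^{n+j(m+1)+1}(s_i,s_l)\,|\bar{\Delta}^{(s_l)}_m|$; (iii) $p^{(s_i)}_{n+q(m+1)}\le p^{(s_i)}_n\prod_{l=1}^k\big(p^{(s_l)}_m\big)^{\sum_{j=0}^{q-1}K^{n+j(m+1)+1}(s_i,s_l)}$. Here $K^l(s_i,s_j)$ denotes the $(s_i,s_j)$ entry of the $l$th power of $K$.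
   Context: Let $K$ be a $k\times k$ matrix with entries in $\{0,1\}$ indexed by $S_k=\{s_1,\dots,s_k\}$, and let $G=\langle S_k\mid K\rangle$ be the semigroup generated by $S_k$ subject to the relations $s_is_j=1_G$ if and only if $K(s_i,s_j)=0$ ($1_G$ the identity). Every $g\in G$ has a unique minimal representation $g=g_1g_2\cdots g_n$ with $g_l\in S_k$ and $K(g_l,g_{l+1})=1$; its length is $|g|=n$ (with $|1_G|=0$). For $g\in G$ and $n\ge0$ the $n$-semiball at $g$ is $\bar{\Delta}^{(g)}_n=\{gh: h\in G,\ |h|\le n,\ |gh|=|g|+|h|\}$. For a finite alphabet $\mathcal{A}$, a pattern is a map $u:H\to\mathcal{A}$ with $H\subset G$ finite; $u$ is accepted by $t\in\mathcal{A}^G$ if there is $g\in G$ with $t_{gh}=u_h$ for all $h\in H$. A tree shift is a subset $X\subseteq\mathcal{A}^G$ consisting of all $t$ that accept no pattern from some fixed set $\mathcal{F}$ of patterns. $p^{(g)}_n$ denotes the number of patterns $u\in\mathcal{A}^{\bar{\Delta}^{(g)}_n}$ accepted by some $t\in X$. *)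

(* Defs.v *)
From mathcomp Require Import all_boot all_algebra.
From mathcomp Require Import boolp.
Set Implicit Arguments. Unset Strict Implicit. Unset Printing Implicit Defensive.

Section TreeShift.
Variables (k : nat) (K : 'M[nat]_k).

Definition adm (w : seq 'I_k) : bool := sorted (fun a b => K a b != 0%N) w.

(* The semigroup G = < S_k | K >, realised as the set of reduced words. *)
Definition G := {w : seq 'I_k | adm w}.

(* Product of reduced words: concatenate, cancelling adjacent pairs s_a s_b
   with K(s_a,s_b) = 0 at the junction (rg is the reversed left factor). *)
Fixpoint cancelw (rg h : seq 'I_k) : seq 'I_k :=
  match rg, h with
  | a :: rg', b :: h' => if K a b == 0%N then cancelw rg' h' else catrev rg h
  | _, _ => catrev rg h
  end.

Definition mulw (g h : seq 'I_k) : seq 'I_k := cancelw (rev g) h.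

Lemma adm_nil : adm [::]. Proof. by []. Qed.

Lemma adm_cancelw rg h : adm (rev rg) -> adm h -> adm (cancelw rg h).
Proof.
elim: rg h => [|a rg IH] [|b h] //=; rewrite ?catrevE ?cats0 ?revK //.
rewrite rev_cons -cats1 => Hg Hh.
case: eqP => Hab.
  apply: IH.
    by move: Hg; rewrite /adm => /cat_sorted2 [].
  by move: Hh; rewrite /adm /= => /path_sorted.
rewrite /adm in Hg *.
move: Hg; case: (rev rg) => [|c s] /=.
  by move=> _; rewrite Hh andbT; apply/eqP.
rewrite !cat_path /= => /andP[-> /andP[Hca _]] /=.
by rewrite Hh andbT; apply/andP; split=> //; apply/eqP.
Qed.

Lemma adm_mulw (g h : G) : adm (mulw (val g) (val h)).
Proof. by apply: adm_cancelw; rewrite ?revK; [exact: valP|exact: valP]. Qed.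

Definition mulG (g h : G) : G := exist _ (mulw (val g) (val h)) (adm_mulw g h).

Definition lenG (g : G) : nat := size (val g).

Definition gen (i : 'I_k) : G := exist _ [:: i] (erefl true).

Definition words_upto (n : nat) : seq (seq 'I_k) :=
  flatten [seq [seq tval t | t : l.-tuple 'I_k] | l <- iota 0 n.+1].
Definition Gupto (n : nat) : seq G := pmap insub (words_upto n).

Definition semiball (g : G) (n : nat) : seq G :=
  undup [seq mulG g h | h <- Gupto n & lenG (mulG g h) == (lenG g + lenG h)%N].

Variable A : finType.

(* A pattern with (finite) support H : seq G is u : {ffun seq_sub H -> A};
   it is accepted by t : G -> A if t_{gh} = u_h for some g and all h in H. *)
Definition accepts (t : G -> A) (H : seq G) (u : {ffun seq_sub H -> A}) : Prop :=
  exists g : G, forall x : seq_sub H, t (mulG g (ssval x)) = u x.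

Definition in_shift (F : forall H : seq G, {ffun seq_sub H -> A} -> Prop)
  (t : G -> A) : Prop :=
  forall (H : seq G) (u : {ffun seq_sub H -> A}), F H u -> ~ accepts t u.

Definition pcount (F : forall H : seq G, {ffun seq_sub H -> A} -> Prop)
  (g : G) (n : nat) : nat :=
  #|[set u : {ffun seq_sub (semiball g n) -> A} |
      `[< exists t : G -> A, in_shift F t /\ accepts t u >] ]|.

End TreeShift.

(* Main.v *)
Require Import Defs.
From mathcomp Require Import all_boot all_algebra.
From mathcomp Require Import boolp.
From mathcomp Require Import zify.
Set Implicit Arguments. Unset Strict Implicit. Unset Printing Implicit Defensive.

Section Words.
Variables (k : nat) (K : 'M[nat]_k).
Local Notation e := (fun a b : 'I_k => K a b != 0%N).

Lemma nocancel s c v : path e c v -> cancelw K (rev (rcons s c)) v = rcons s c ++ v.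
Proof.
rewrite rev_rcons; case: v => [|d v'] /=.
  by rewrite catrevE revK cats1 cats0.
by case/andP=> Hcd _; rewrite (negbTE Hcd) catrevE revK cat_rcons.
Qed.

Lemma cancelw_assoc rg p v : adm K (p ++ v) ->
  cancelw K rg (p ++ v) = cancelw K (rev (cancelw K rg p)) v.
Proof.
elim: p rg => [|b p IH] rg /=.
  case: rg => [|a rg] _ /=; first by []. by rewrite [in RHS]catrevE rev_cat revK; case: v.
move=> Hadm.
have Hb : path e (last b p) v by move: Hadm; rewrite cat_path => /andP[].
case: rg => [|a rg] /=.
  by rewrite (lastI b p) nocancel // -lastI.
case: eqP => _.
  by apply: IH; move: Hadm => /path_sorted.
have -> : catrev rg [:: a, b & p] = rcons (rev rg ++ a :: belast b p) (last b p).
  by rewrite catrevE rcons_cat /= -lastI.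
by rewrite nocancel // rcons_cat /= -lastI catrevE -catA.
Qed.

Lemma mulw_cat p v : adm K (p ++ v) -> mulw K p v = p ++ v.
Proof.
rewrite /mulw; case/lastP: p => [|p c] Hadm /=.
  by rewrite /= ; case: v Hadm => //.
apply: nocancel; move: Hadm; rewrite /adm cat_rcons sorted_cat_cons.
by case/andP.
Qed.

End Words.


Section Ball.
Variables (k : nat) (K : 'M[nat]_k).
Local Notation e := (fun a b : 'I_k => K a b != 0%N).

Lemma mem_words_upto n w : (w \in words_upto k n) = (size w <= n).
Proof.
apply/flatten_mapP/idP.
  case=> l; rewrite mem_iota add0n ltnS => /andP[_ Hl] /mapP[t _ ->].
  by rewrite size_tuple.
move=> Hw; exists (size w); first by rewrite mem_iota ltnS Hw.
by apply/mapP; exists (in_tuple w); rewrite ?mem_enum.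
Qed.

Lemma mem_Gupto n (h : G K) : (h \in Gupto K n) = (size (val h) <= n).
Proof. by rewrite /Gupto mem_pmap_sub mem_words_upto. Qed.

Lemma mem_ball i n x : (x \in semiball (gen K i) n) =
  (head i (val x) == i) && (0 < size (val x) <= n.+1).
Proof.
rewrite /semiball mem_undup; apply/mapP/idP.
  case=> h; rewrite mem_filter mem_Gupto => /andP[Hlen Hh] ->.
  move: Hlen Hh; rewrite /lenG /=.
  case: h => [[|b h'] Hadm]; rewrite /mulw /=; first by rewrite eqxx.
  case: (K i b =P 0%N) => Hib /=.
    by move=> /eqP; lia.
  by move=> _ Hs; rewrite eqxx.
case: x => [[|a s] Hadm] /= /andP[/eqP Ha Hs] //; subst a.
have Hs' : adm K s by apply: (path_sorted Hadm).
exists (exist _ s Hs').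
  rewrite mem_filter mem_Gupto /= -ltnS Hs andbT /lenG /=.
  case: s Hadm {Hs Hs'} => [|b s] //= /andP[Hib _].
  by rewrite /mulw /= (negbTE Hib).
apply: val_inj => /=; rewrite /mulw /=.
case: s Hadm {Hs Hs'} => [|b s] //= /andP[Hib _].
by rewrite (negbTE Hib).
Qed.

Lemma ball_uniq (g : G K) n : uniq (semiball g n).
Proof. exact: undup_uniq. Qed.

End Ball.


Lemma uniq_flatten_disj (S R : eqType) (s : seq S) (t : S -> seq R) :
  uniq s -> (forall x, x \in s -> uniq (t x)) ->
  (forall x x' z, x \in s -> x' \in s -> z \in t x -> z \in t x' -> x = x') ->
  uniq (flatten [seq t x | x <- s]).
Proof.
elim: s => [|a s IH] //= /andP[Has Hs] Hu Hd.
rewrite cat_uniq Hu ?mem_head // IH //=; last first.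
- by move=> x x' z Hx Hx'; apply: Hd; rewrite inE ?Hx ?Hx' orbT.
- by move=> x Hx; apply: Hu; rewrite inE Hx orbT.
rewrite andbT; apply/hasPn => z /flatten_mapP [x Hx Hz]; apply/negP => Hza.
have Eax : a = x by apply: (Hd a x z) => //; rewrite inE ?eqxx ?Hx ?orbT.
by move: Has; rewrite Eax Hx.
Qed.

Lemma size_count_sum (T : Type) (k : nat) (f : T -> 'I_k) (s : seq T) :
  size s = \sum_(l < k) count (fun w => f w == l) s.
Proof.
elim: s => [|x s IH] /=; first by rewrite big1.
rewrite big_split /= -IH -add1n; congr (_ + _).
rewrite (bigD1 (f x)) //= eqxx big1 // => l /negbTE; rewrite eq_sym => ->.
by [].
Qed.

Section Paths.
Variables (k : nat) (K : 'M[nat]_k).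
Local Notation e := (fun a b : 'I_k => K a b != 0%N).

Fixpoint W (i : 'I_k) (L : nat) : seq (seq 'I_k) :=
  if L is L'.+1 then
    [seq i :: s | j <- [seq j <- enum 'I_k | K i j != 0%N], s <- W j L']
  else [:: [:: i]].

Lemma mem_W L i w : (w \in W i L) = [&& adm K w, head i w == i & size w == L.+1].
Proof.
elim: L i w => [|L IH] i w /=.
  rewrite inE; case: w => [|a [|b s]] //=; first by rewrite andbF.
  by rewrite eqseq_cons /= !andbF.
apply/flatten_mapP/idP.
  case=> j; rewrite mem_filter mem_enum andbT => Hij /mapP [s Hs ->].
  move: Hs; rewrite IH => /and3P[Hadm /eqP Hj /eqP Hsz].
  case: s Hadm Hj Hsz => [|b s] //= Hadm Hj [Hsz]; subst b.
  by rewrite /adm /= Hij Hadm Hsz !eqxx.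
move=> /and3P[Hadm /eqP Ha /eqP Hsz].
case: w Hadm Ha Hsz => [|a [|b s]] //= Hadm Ha [Hsz]; subst a.
move: Hadm; rewrite /adm /= => /andP[Hib Hadm].
exists b; first by rewrite mem_filter mem_enum Hib.
apply/mapP; exists (b :: s) => //.
by rewrite IH /adm /= Hadm Hsz !eqxx.
Qed.

Lemma W_nil L i : [::] \notin W i L.
Proof. by rewrite mem_W /= andbF. Qed.

Lemma W_uniq L i : uniq (W i L).
Proof.
elim: L i => [|L IH] i //=.
apply: uniq_flatten_disj.
- by rewrite filter_uniq // enum_uniq.
- by move=> j _; rewrite map_inj_uniq // => x y [].
move=> x x' z _ _ /mapP[s Hs ->] /mapP[s' Hs' [Es]]; subst s'.
move: Hs Hs'; rewrite !mem_W.
case: s => [|b s] /and3P[_ /eqP E1 _] /and3P[_ /eqP E2 _] //.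
by rewrite -E1 -E2.
Qed.

End Paths.


Section Count.
Variables (k : nat) (K : 'M[nat]_k).
Hypothesis HK : forall a b, K a b <= 1.

Lemma K01 a b : K a b = (K a b != 0%N).
Proof. by have := HK a b; case: (K a b) => [|[|]]. Qed.

Lemma Kpow0 i l : (K ^+ 0)%R i l = (i == l).
Proof. by rewrite GRing.expr0 -idmxE mxE natn. Qed.

Lemma KpowS L i l : (K ^+ L.+1)%R i l = \sum_(j < k) K i j * (K ^+ L)%R j l.
Proof. by rewrite GRing.exprS -mulmxE mxE. Qed.

Lemma KpowSr L i l : (K ^+ L.+1)%R i l = \sum_(j < k) (K ^+ L)%R i j * K j l.
Proof. by rewrite GRing.exprSr -mulmxE mxE. Qed.

Lemma KpowD a b i l : (K ^+ (a + b))%R i l = \sum_(j < k) (K ^+ a)%R i j * (K ^+ b)%R j l.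
Proof. by rewrite GRing.exprD -mulmxE mxE. Qed.


Lemma count_last L i l :
  count (fun w => last i w == l) (W K i L) = (K ^+ L)%R i l.
Proof.
elim: L i => [|L IH] i /=; first by rewrite Kpow0 addn0.
rewrite count_flatten KpowS sumnE !big_map big_filter big_enum_cond /= big_mkcond /=.
apply: eq_bigr => j _.
rewrite (K01 i j).
case: (K i j != 0%N); last by [].
rewrite mul1n -IH count_map; apply: eq_in_count => s Hs.
by case: s Hs => [|b s] //; rewrite (negbTE (W_nil _ _ _)).
Qed.

Lemma size_W L i : size (W K i L) = \sum_(l < k) (K ^+ L)%R i l.
Proof.
rewrite (size_count_sum (fun w => last i w)).
by apply: eq_bigr => l _; rewrite count_last.
Qed.


Definition BW i n := flatten [seq W K i L | L <- iota 0 n.+1].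

Lemma BW_uniq i n : uniq (BW i n).
Proof.
apply: uniq_flatten_disj; first exact: iota_uniq.
  by move=> L _; apply: W_uniq.
move=> L L' z _ _; rewrite !mem_W => /and3P[_ _ /eqP ->] /and3P[_ _ /eqP []].
by [].
Qed.

Lemma size_BW i n : size (BW i n) = \sum_(L < n.+1) \sum_(l < k) (K ^+ L)%R i l.
Proof.
rewrite /BW size_flatten /shape sumnE !big_map.
have -> : iota 0 n.+1 = index_iota 0 n.+1 by rewrite /index_iota subn0.
by rewrite big_mkord; apply: eq_bigr => L _; rewrite size_W.
Qed.

Lemma size_ball i n :
  size (semiball (gen K i) n) = \sum_(L < n.+1) \sum_(l < k) (K ^+ L)%R i l.
Proof.
rewrite -size_BW -(size_map val); apply: perm_size.
apply: uniq_perm; first by rewrite (map_inj_uniq val_inj) ball_uniq.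
  exact: BW_uniq.
move=> w; apply/mapP/flatten_mapP.
  case=> x; rewrite mem_ball => /andP[Hh /andP[H0 Hn]] ->.
  exists (size (val x)).-1; first by rewrite mem_iota add0n /= prednK.
  have := mem_W K (size (val x)).-1 i (val x). rewrite prednK // (valP x) Hh eqxx /=.
  by move=> H; exact: H.
case=> L; rewrite mem_iota mem_W => HL /and3P[Hadm Hh /eqP Hs].
exists (exist _ w Hadm) => //.
by rewrite mem_ball /= Hh Hs /=; lia.
Qed.

End Count.


Section Alg.
Variables (k : nat) (K : 'M[nat]_k).

Definition Sb i n := \sum_(L < n.+1) \sum_(l < k) (K ^+ L)%R i l.

Lemma sum_pow0 i : \sum_(l < k) (K ^+ 0)%R i l = 1.
Proof.
under eq_bigr do rewrite Kpow0.
rewrite (bigD1 i) //= eqxx big1 // => l /negbTE; rewrite eq_sym => ->.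
by [].
Qed.

Lemma S_first i n : Sb i n = 1 + \sum_(1 <= l < n.+1) \sum_(j < k) (K ^+ l)%R i j.
Proof.
rewrite /Sb big_ord_recl sum_pow0 big_add1 /= big_mkord.
by [].
Qed.

Lemma S_step i N m :
  Sb i (N + m.+1) = Sb i N + \sum_(c < k) (K ^+ N.+1)%R i c * Sb c m.
Proof.
rewrite /Sb -addSn big_split_ord /=; congr (_ + _).
under eq_bigr => r _ do under eq_bigr => l _ do rewrite KpowD.
under eq_bigr => r _ do rewrite exchange_big.
rewrite exchange_big /=; apply: eq_bigr => c _.
rewrite big_distrr /=; apply: eq_bigr => r _.
by rewrite big_distrr.
Qed.

Lemma S_blocks i n m q :
  Sb i (n + q * (m + 1)) = Sb i n +
    \sum_(l < k) \sum_(j < q) (K ^+ (n + j * (m + 1) + 1))%R i l * Sb l m.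
Proof.
elim: q => [|q IH].
  by rewrite mul0n addn0 big1 ?addn0 // => l _; rewrite big_ord0.
have -> : n + q.+1 * (m + 1) = (n + q * (m + 1)) + m.+1 by rewrite mulSn; lia.
rewrite S_step IH -addnA; congr (_ + _).
under [in RHS]eq_bigr => l _ do rewrite big_ord_recr /=.
rewrite big_split /=; congr (_ + _).
by apply: eq_bigr => c _; rewrite -[(n + q * (m + 1)).+1]addn1.
Qed.

End Alg.


Lemma memcl (T : eqType) (s2 s1 : seq T) x : x \in s1 -> x \in s1 ++ s2.
Proof. by rewrite mem_cat => ->. Qed.
Lemma memcr (T : eqType) (s1 s2 : seq T) x : x \in s2 -> x \in s1 ++ s2.
Proof. by rewrite mem_cat orbC => ->. Qed.

Section Patterns.
Variables (k : nat) (K : 'M[nat]_k) (A : finType).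
Variable F : forall H : seq (G K), {ffun seq_sub H -> A} -> Prop.

Definition pc (H : seq (G K)) : nat :=
  #|[set u : {ffun seq_sub H -> A} |
      `[< exists t : G K -> A, in_shift F t /\ accepts t u >] ]|.

Lemma pcountE g n : pcount F g n = pc (semiball g n).
Proof. by []. Qed.

Lemma inPC H (u : {ffun seq_sub H -> A}) :
  (u \in [set u : {ffun seq_sub H -> A} |
      `[< exists t : G K -> A, in_shift F t /\ accepts t u >] ]) <->
  (exists t : G K -> A, in_shift F t /\ accepts t u).
Proof. by rewrite inE; split => /asboolP. Qed.

Lemma pc_mono H H' : {subset H <= H'} -> pc H <= pc H'.
Proof.
move=> Hsub.
pose restr (u : {ffun seq_sub H' -> A}) : {ffun seq_sub H -> A} :=
  [ffun x : seq_sub H => u (SeqSub (Hsub _ (ssvalP x)))].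
rewrite /pc; apply: leq_trans (leq_imset_card restr _).
apply: subset_leq_card; apply/subsetP => u /inPC [t [Ht [g Hg]]].
apply/imsetP.
exists [ffun y : seq_sub H' => t (mulG g (ssval y))].
  by apply/inPC; exists t; split => //; exists g => y; rewrite ffunE.
by apply/ffunP => x; rewrite !ffunE /= Hg.
Qed.

Lemma pc_cat H1 H2 : pc (H1 ++ H2) <= pc H1 * pc H2.
Proof.
pose r1 (u : {ffun seq_sub (H1 ++ H2) -> A}) : {ffun seq_sub H1 -> A} :=
  [ffun x : seq_sub H1 => u (SeqSub (memcl H2 (ssvalP x)))].
pose r2 (u : {ffun seq_sub (H1 ++ H2) -> A}) : {ffun seq_sub H2 -> A} :=
  [ffun x : seq_sub H2 => u (SeqSub (memcr H1 (ssvalP x)))].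
rewrite /pc -cardsX -(card_in_imset (f := fun u => (r1 u, r2 u))); last first.
  move=> u u' _ _ [E1 E2]; apply/ffunP => x.
  have := ssvalP x; rewrite mem_cat => /orP[Hx|Hx].
    have := congr1 (fun f : {ffun seq_sub H1 -> A} => f (SeqSub Hx)) E1; rewrite !ffunE.
    by have -> : SeqSub (memcl H2 Hx) = x by apply: val_inj.
  have := congr1 (fun f : {ffun seq_sub H2 -> A} => f (SeqSub Hx)) E2; rewrite !ffunE.
  by have -> : SeqSub (memcr H1 Hx) = x by apply: val_inj.
apply: subset_leq_card; apply/subsetP => z /imsetP [u /inPC [t [Ht [g Hg]]] ->].
rewrite inE /=; apply/andP; split; apply/inPC; exists t; split => //;
  exists g => x; by rewrite ffunE -Hg.
Qed.

Lemma pc_nil : pc [::] <= 1.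
Proof.
rewrite /pc; apply: leq_trans (max_card _) _.
by rewrite card_ffun card_seq_sub.
Qed.

Lemma pc_flatten (Hs : seq (seq (G K))) : pc (flatten Hs) <= \prod_(H <- Hs) pc H.
Proof.
elim: Hs => [|H Hs IH] /=; first by rewrite big_nil pc_nil.
rewrite big_cons; apply: leq_trans (pc_cat _ _) _.
by rewrite leq_mul2l IH orbT.
Qed.

Lemma pc_trans (P : G K) H' :
  (forall h, h \in H' -> forall g, mulG g (mulG P h) = mulG (mulG g P) h) ->
  pc (map (mulG P) H') <= pc H'.
Proof.
move=> Hassoc.
pose phi (u : {ffun seq_sub (map (mulG P) H') -> A}) : {ffun seq_sub H' -> A} :=
  [ffun y : seq_sub H' => u (SeqSub (map_f (mulG P) (ssvalP y)))].
rewrite /pc -(card_in_imset (f := phi)); last first.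
  move=> u u' _ _ E; apply/ffunP => x.
  have := ssvalP x => /mapP [h Hh Ex].
  have := congr1 (fun f : {ffun seq_sub H' -> A} => f (SeqSub Hh)) E; rewrite !ffunE.
  by have -> : SeqSub (map_f (mulG P) Hh) = x by apply: val_inj.
apply: subset_leq_card; apply/subsetP => z /imsetP [u /inPC [t [Ht [g Hg]]] ->].
apply/inPC; exists t; split => //; exists (mulG g P) => y.
by rewrite ffunE -Hassoc ?(ssvalP y) // -Hg.
Qed.

End Patterns.


Lemma sum_count (T : Type) (k : nat) (g : T -> 'I_k) (f : 'I_k -> nat) (s : seq T) :
  \sum_(x <- s) f (g x) = \sum_(c < k) count (fun x => g x == c) s * f c.
Proof.
elim: s => [|x s IH]; first by rewrite big_nil big1.
rewrite big_cons IH /=.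
under [in RHS]eq_bigr do rewrite mulnDl.
rewrite big_split /=; congr (_ + _).
rewrite (bigD1 (g x)) //= eqxx mul1n big1 ?addn0 // => c /negbTE.
by rewrite eq_sym => ->.
Qed.

Lemma prod_count (T : Type) (k : nat) (g : T -> 'I_k) (f : 'I_k -> nat) (s : seq T) :
  \prod_(x <- s) f (g x) = \prod_(c < k) f c ^ count (fun x => g x == c) s.
Proof.
elim: s => [|x s IH]; first by rewrite big_nil big1.
rewrite big_cons IH /=.
under [in RHS]eq_bigr do rewrite expnD.
rewrite big_split /=; congr (_ * _).
rewrite (bigD1 (g x)) //= eqxx expn1 big1 ?muln1 // => c /negbTE.
by rewrite eq_sym => ->.
Qed.

Section Main.
Variables (k : nat) (K : 'M[nat]_k).
Hypothesis HK : forall a b, K a b <= 1.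
Local Notation e := (fun a b : 'I_k => K a b != 0%N).

Definition G0 : G K := exist _ [::] (adm_nil K).

Lemma mulG_assoc (g P h : G K) : adm K (val P ++ val h) ->
  mulG g (mulG P h) = mulG (mulG g P) h.
Proof.
move=> H; apply: val_inj => /=.
by rewrite (mulw_cat H) /mulw cancelw_assoc.
Qed.

Lemma adm_join i a l m P (v : G K) : P \in W K i a -> v \in semiball (gen K l) m ->
  K (last i P) l != 0%N -> adm K (P ++ val v).
Proof.
rewrite mem_W mem_ball => /and3P[HP /eqP HPh /eqP HPs] /andP[/eqP Hvh /andP[Hv0 _]] Hl.
case: P HP HPh HPs Hl => [|b P] //= HP Hb _; subst b.
case: v Hvh Hv0 => [[|c v'] Hva] //= Hc _; subst c => Hl.
by rewrite cat_path HP /= Hl.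
Qed.

Variables (A : finType) (F : forall H : seq (G K), {ffun seq_sub H -> A} -> Prop).
Variables (i : 'I_k) (n m q : nat).

Definition Ps := flatten [seq W K i (n + j * (m + 1)) | j <- iota 0 q].
Definition idx := flatten [seq [seq (P, l) | l <- enum 'I_k & K (last i P) l != 0%N] | P <- Ps].
Definition piece (x : seq 'I_k * 'I_k) := map (mulG (insubd G0 x.1)) (semiball (gen K x.2) m).

Lemma mem_idx x : x \in idx ->
  (exists a, x.1 \in W K i a) /\ K (last i x.1) x.2 != 0%N.
Proof.
case/flatten_mapP => P /flatten_mapP [j _ HP] /mapP [l]; rewrite mem_filter => /andP[Hl _] ->.
by split => //; exists (n + j * (m + 1)).
Qed.

Lemma piece_le x : x \in idx -> pc F (piece x) <= pc F (semiball (gen K x.2) m).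
Proof.
move=> /mem_idx [[a Ha] Hl].
have Hadm : adm K x.1 by move: Ha; rewrite mem_W => /and3P[].
apply: pc_trans => h Hh g; apply: mulG_assoc.
rewrite (insubdK G0 Hadm).
exact: adm_join Ha Hh Hl.
Qed.


Lemma val_mulG (g h : G K) : val (mulG g h) = mulw K (val g) (val h).
Proof. by []. Qed.

Lemma cover_ball x : x \in semiball (gen K i) (n + q * (m + 1)) ->
  x \in semiball (gen K i) n ++ flatten [seq piece y | y <- idx].
Proof.
rewrite mem_ball mem_cat => /andP[Hh /andP[H0 HN]].
case: x Hh H0 HN => [[|c s] Hadm] //= /eqP Hc _ HN; subst c.
apply/orP; case: (leqP (size s) n) => Hsn; [left | right].
  by rewrite mem_ball /= eqxx /= ltnS Hsn.
move Ed: (size s - n.+1) => d.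
have Hm : 0 < m + 1 by rewrite addn1.
have Hd := divn_eq d (m + 1).
have Hr := ltn_pmod d Hm.
have Hj : d %/ (m + 1) < q by rewrite ltn_divLR // -Ed ltn_subLR // addSn.
move: Hd Hr Hj; move: (d %/ (m + 1)) (d %% (m + 1)) => j r Hd Hr Hj.
move Ea: (n + j * (m + 1)) => a.
have Has : a < size s by lia.
have Hsd := size_drop a s.
case Hdrop: (drop a s) Hsd => [|l v'] Hsd; first by move: Hsd => /= /eqP; rewrite eq_sym subn_eq0 leqNgt Has.
have Hadm' : path e i (take a s ++ l :: v') by rewrite -Hdrop cat_take_drop.
move: (Hadm'); rewrite cat_path => /andP[HP /= /andP[Hl Hv]].
set P := i :: take a s.
have HadmP : adm K P by [].
have HPW : P \in W K i a by rewrite mem_W HadmP /= eqxx /= size_take Has.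
have EP : val (insubd G0 P) = P := insubdK G0 HadmP.
pose vG : G K := exist _ (l :: v') Hv.
apply/flatten_mapP; exists (P, l).
  apply/flatten_mapP; exists P.
    by apply/flatten_mapP; exists j; rewrite ?Ea // mem_iota /=; lia.
  by apply/mapP; exists l => //; rewrite mem_filter mem_enum andbT.
apply/mapP; exists vG.
  rewrite mem_ball /= eqxx /=; move: Hsd => /= H; rewrite -ltnS H.
  have Es : size s = (n.+1 + d)%N by rewrite -Ed subnKC.
  rewrite Es -Ea Hd; clear -Hr; lia.
apply: val_inj; rewrite val_mulG EP mulw_cat //=.
by rewrite -Hdrop cat_take_drop.
Qed.

Lemma count_idx l :
  count (fun x => x.2 == l) idx = \sum_(j < q) (K ^+ (n + j * (m + 1) + 1))%R i l.
Proof.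
rewrite /idx count_flatten sumnE !big_map.
have E : forall P, count (fun x => x.2 == l)
    [seq (P, l0) | l0 <- [seq l0 <- enum 'I_k | K (last i P) l0 != 0%N]]
    = K (last i P) l.
  move=> P; rewrite count_map (eq_count (a2 := pred1 l)) //.
  rewrite count_uniq_mem; last by rewrite filter_uniq // enum_uniq.
  by rewrite mem_filter mem_enum andbT [RHS](K01 HK).
under eq_bigr do rewrite E.
rewrite /Ps big_flatten /= big_map.
have -> : iota 0 q = index_iota 0 q by rewrite /index_iota subn0.
rewrite big_mkord; apply: eq_bigr => j _.
rewrite (sum_count (fun P => last i P) (fun c => K c l)) [n + j * (m + 1) + 1]addn1 KpowSr.
by apply: eq_bigr => c _; rewrite count_last.
Qed.

End Main.


Unset Implicit Arguments. Set Strict Implicit. Set Printing Implicit Defensive.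

Theorem lemma3p4 (k : nat) (K : 'M[nat]_k) (HK : forall a b, K a b <= 1)
  (A : finType) (F : forall H : seq (G K), {ffun seq_sub H -> A} -> Prop)
  (i : 'I_k) (m n q : nat) (hq : 1 <= q) :
  [/\ size (semiball (gen K i) n)
        = 1 + \sum_(1 <= l < n.+1) \sum_(j < k) (K ^+ l)%R i j,
      size (semiball (gen K i) (n + q * (m + 1)))
        = size (semiball (gen K i) n)
          + \sum_(l < k) \sum_(j < q)
              (K ^+ (n + j * (m + 1) + 1))%R i l * size (semiball (gen K l) m)
    & pcount F (gen K i) (n + q * (m + 1))
        <= pcount F (gen K i) n
           * \prod_(l < k) (pcount F (gen K l) m)
               ^ (\sum_(j < q) (K ^+ (n + j * (m + 1) + 1))%R i l) ].
Proof.
split.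
- by rewrite (size_ball HK); exact: S_first.
- under eq_bigr => l _ do under eq_bigr => j _ do rewrite (size_ball HK).
  rewrite !(size_ball HK).
  exact: S_blocks.
set Hs := [seq piece K m y | y <- idx K i n m q].
apply: (@leq_trans (pc F (semiball (gen K i) n ++ flatten Hs))).
  by apply: pc_mono => x Hx; apply: cover_ball.
apply: leq_trans (pc_cat F _ _) _.
rewrite pcountE leq_mul2l; apply/orP; right.
apply: leq_trans (pc_flatten F Hs) _.
rewrite /Hs big_map.
apply: (@leq_trans (\prod_(x <- idx K i n m q) pc F (semiball (gen K x.2) m))).
  rewrite big_seq [leqRHS]big_seq.
  by apply: leq_prod => x Hx; exact: (piece_le F Hx).
rewrite (prod_count (fun x => x.2) (fun l => pc F (semiball (gen K l) m))).
by apply: eq_leq; apply: eq_bigr => l _; rewrite (count_idx HK).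
Qed.
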